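(* Let $n$ be a nonnegative integer and $a,b\in\mathbb{C}$ such that all expressions below are defined (no lower parameter zero or a negative integer). Then \[ \left[{}_3F_2\!\left(\left.{\frac{a}{2},\frac{a+1}{2},b \atop a,1+a+n}\right| 4\right)\right]_n =\frac{(b)_n}{n!}\,{}_4F_3\!\left(\left.{-n,\frac{1+a-b}{2},\frac{2+a-b}{2},1 \atop 1+a-b,1-b-n,1+a+n}\right| 4\right). \]
   Context: For $a\in\mathbb{C}$, $(a)_0=1$ and $(a)_k=a(a+1)\cdots(a+k-1)$ for $k\ge1$. The hypergeometric series is ${}_rF_s\!\left(\left.{\alpha_1,\ldots,\alpha_r\atop \beta_1,\ldots,\beta_s}\right|z\right)=\sum_{k\ge0}\frac{(\alpha_1)_k\cdots(\alpha_r)_k}{k!(\beta_1)_k\cdots(\beta_s)_k}z^k$, with no lower parameter zero or a negative integer; it is a finite sum when an upper parameter is $-n$. The bracket $\left[{}_rF_s\!\left(\left.{\alpha_1,\ldots,\alpha_r\atop \beta_1,\ldots,\beta_s}\right|z\right)\right]_n$ denotes the sum of the first $n+1$ terms, $\sum_{k=0}^{n}\frac{(\alpha_1)_k\cdots(\alpha_r)_k}{k!(\beta_1)_k\cdots(\beta_s)_k}z^k$. *)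

(* Defs.v *)
From HB Require Import structures.
From mathcomp Require Import all_boot all_order all_algebra.
From mathcomp Require Import complex.
From mathcomp Require Import reals.
Set Implicit Arguments. Unset Strict Implicit. Unset Printing Implicit Defensive.
Import Order.TTheory GRing.Theory Num.Theory.
Local Open Scope ring_scope.

Definition poch {F : ringType} (a : F) (k : nat) : F :=
  \prod_(i < k) (a + i%:R).

Definition nonpos_int {F : ringType} (x : F) : Prop :=
  exists m : nat, x = - m%:R.

Definition hyp_term {F : fieldType} (alphas betas : seq F) (z : F) (k : nat) : F :=
  (\prod_(a <- alphas) poch a k) /
  (k`!%:R * \prod_(b <- betas) poch b k) * z ^+ k.

(* [ rF_s(alphas; betas | z) ]_n : sum of the first n+1 terms *)
Definition hypF_trunc {F : fieldType} (alphas betas : seq F) (z : F) (n : nat) : F :=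
  \sum_(k < n.+1) hyp_term alphas betas z k.

(* terminating rF_s whose upper parameters contain -n : the finite sum k = 0..n
   (all later terms vanish since (-n)_k = 0 for k > n) *)
Definition hypF_terminating {F : fieldType} (n : nat) (alphas betas : seq F) (z : F) : F :=
  hypF_trunc ((- n%:R) :: alphas) betas z n.

(* Main.v *)
Require Import Defs.
From HB Require Import structures.
From mathcomp Require Import all_boot all_order all_algebra.
From mathcomp Require Import complex.
From mathcomp Require Import reals.
From mathcomp Require Import ring lra zify.
Import Order.TTheory GRing.Theory Num.Theory.
Local Open Scope ring_scope.
Local Open Scope complex_scope.

Section H.
Variable F : numFieldType.
Implicit Types x y Y Z : F.

Lemma poch0 x : poch x 0 = 1.
Proof. by rewrite /poch big_ord0. Qed.

Lemma pochS x k : poch x k.+1 = poch x k * (x + k%:R).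
Proof. by rewrite /poch big_ord_recr. Qed.

Lemma pochD x i j : poch x (i + j) = poch x i * poch (x + i%:R) j.
Proof.
elim: j => [|j IH]; first by rewrite addn0 poch0 mulr1.
by rewrite addnS !pochS IH natrD addrA mulrA.
Qed.

Lemma pochSl x k : poch x k.+1 = x * poch (x + 1) k.
Proof.
by rewrite -add1n pochD {1}/poch big_ord1 /= addr0.
Qed.

Lemma poch1 k : poch (1 : F) k = k`!%:R.
Proof.
elim: k => [|k IH]; first by rewrite poch0.
by rewrite pochS IH factS natrM mulrC -natr1 addrC.
Qed.

Lemma poch_neq0 x k : ~ nonpos_int x -> poch x k != 0.
Proof.
move=> hx; elim: k => [|k IH]; first by rewrite poch0 oner_neq0.
rewrite pochS mulf_neq0 //; apply/negP => /eqP h.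
apply: hx; exists k; by rewrite -[x](addrK k%:R) h add0r.
Qed.

Lemma dup x k : poch (x/2) k * poch ((x+1)/2) k * 4 ^+ k = poch x (k.*2).
Proof.
elim: k => [|k IH]; first by rewrite !poch0 !mulr1.
rewrite doubleS !pochS -IH exprS -!mul2n !natrM -!natr1.
by field.
Qed.

Lemma fact_neq0 k : (k`!%:R : F) != 0.
Proof. by rewrite pnatr_eq0 -lt0n fact_gt0. Qed.

Lemma poch_refl x k : poch x k = (-1) ^+ k * poch (- x - k%:R + 1) k.
Proof.
elim: k x => [|k IH] x; first by rewrite !poch0 expr0 mulr1.
rewrite pochS IH pochSl.
have -> : - x - k.+1%:R + 1 + 1 = - x - k%:R + 1 by rewrite -natr1; ring.
rewrite exprS -natr1; ring.
Qed.

Lemma pochQ (b : F) j k : poch b (j+k) * poch (- (j+k)%:R) k * j`!%:R =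
  poch b j * poch (1 - b - (j+k)%:R) k * (j+k)`!%:R.
Proof.
rewrite (poch_refl (- _)) (poch_refl (1 - b - _)).
have -> : - - ((j + k)%:R) - k%:R + 1 = 1 + j%:R :> F by rewrite natrD; ring.
have -> : - (1 - b - (j + k)%:R) - k%:R + 1 = b + j%:R by rewrite natrD; ring.
rewrite -!(poch1 (j+k)) -(poch1 j) !pochD; ring.
Qed.

Lemma pascal_sum (f : nat -> F) k :
  \sum_(0 <= i < k.+2) 'C(k.+1, i)%:R * f i =
  \sum_(0 <= i < k.+1) 'C(k, i)%:R * (f i + f i.+1).
Proof.
rewrite big_nat_recl // bin0.
under eq_bigr do rewrite binS natrD mulrDl.
rewrite big_split /=.
under [RHS]eq_bigr do rewrite mulrDr.
rewrite big_split /= [in RHS]big_nat_recl // bin0.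
rewrite [X in _ + (X + _) = _]big_nat_recr //= bin_small // mul0r addr0.
by rewrite addrA.
Qed.

Lemma V1 Y Z k : poch (Y - Z) k = \sum_(0 <= i < k.+1)
   'C(k, i)%:R * ((-1) ^+ i * poch Z i * poch (Y + i%:R) (k - i)).
Proof.
elim: k Y => [|k IH] Y.
  by rewrite big_nat1 !poch0 bin0 expr0 !mulr1.
rewrite (pascal_sum (fun i => (-1) ^+ i * poch Z i * poch (Y + i%:R) (k.+1 - i))).
rewrite pochSl.
have -> : Y - Z + 1 = (Y + 1) - Z by ring.
rewrite IH mulr_sumr; apply: eq_big_nat => i /andP [_ hi].
rewrite subSS subSn // pochSl pochS -natr1 exprS.
have -> : Y + 1 + i%:R = Y + i%:R + 1 by ring.
have -> : Y + (i%:R + 1) = Y + i%:R + 1 by ring.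
ring.
Qed.

Lemma tri_sum (G : nat -> nat -> F) n :
  \sum_(0 <= m < n.+1) \sum_(0 <= j < m.+1) G m j =
  \sum_(0 <= j < n.+1) \sum_(j <= m < n.+1) G m j.
Proof.
elim: n => [|n IH]; first by rewrite !big_nat1.
rewrite big_nat_recr //= IH.
rewrite [RHS]big_nat_recr //= big_nat1.
rewrite [X in _ = X + _](_ : _ = \sum_(0 <= j < n.+1) (\sum_(j <= m < n.+1) G m j + G n.+1 j)); last first.
  apply: eq_big_nat => j /andP [_ hj]; by rewrite big_nat_recr // ltnW.
rewrite big_split /= -addrA; congr (_ + _).
by rewrite big_nat_recr.
Qed.

Lemma poch_nat K r : poch ((K.+1)%:R : F) r = ('C(K + r, r) * r`!)%:R.
Proof.
rewrite bin_ffact; elim: r => [|r IH]; first by rewrite poch0 ffactn0.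
by rewrite pochS IH addnS ffactSS natrM mulrC -natrD addSn.
Qed.

Lemma core (a b : F) n (hs : forall k, poch (1 + a + n%:R) k != 0) :
  \sum_(0 <= k < n.+1) poch b k / k`!%:R * poch (a + k%:R) k / poch (1 + a + n%:R) k =
  \sum_(0 <= k < n.+1) poch b (n - k) / (n - k)`!%:R * poch (1 + a - b + k%:R) k
      / poch (1 + a + n%:R) k.
Proof.
set s := 1 + a + n%:R.
have hsplit : forall i k, (i <= k)%N ->
    poch s k = poch s i * poch (s + i%:R) (k - i) /\ poch (s + i%:R) (k - i) != 0.
  move=> i k hik; rewrite -pochD subnKC //; split => //.
  by move: (hs k); rewrite -{1}(subnKC hik) pochD mulf_eq0 negb_or => /andP [].
pose G j i := (-1) ^+ i * 'C(n - j, i)%:R * poch b (j + i) / (j`!%:R * poch s i).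
transitivity (\sum_(0 <= m < n.+1) \sum_(0 <= j < m.+1) G j (m - j)%N).
  apply: eq_big_nat => m /andP [_ hm].
  rewrite big_nat_rev /=.
  have e : s - ((n - m).+1)%:R = a + m%:R.
    by rewrite /s -natr1 natrB; [ring | lia].
  rewrite -e V1 mulr_sumr mulr_suml; apply: eq_big_nat => r /andP [_ hr].
  have hrm : (r <= m)%N by lia.
  rewrite add0n subSS subKn // /G subnK // poch_nat.
  have -> : (n - (m - r) = (n - m) + r)%N by lia.
  have [e1 hz] := hsplit r m hrm.
  rewrite e1.
  have hf := bin_fact hrm.
  have hC : ('C(m, r)%:R : F) != 0 by rewrite pnatr_eq0 -lt0n bin_gt0.
  rewrite -hf !natrM.
  have := fact_neq0 r; have := fact_neq0 (m - r); have := hs r.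
  move=> h1 h2 h3.
  field.
  by rewrite h1 h2 h3 hC hz.
rewrite tri_sum.
transitivity (\sum_(0 <= j < n.+1) \sum_(0 <= i < (n - j).+1) G j i).
  apply: eq_big_nat => j /andP [_ hj].
  rewrite -{1}(add0n j) big_addn subSn; last by lia.
  by apply: eq_big_nat => i _; rewrite addnK.
rewrite big_nat_rev /=.
apply: eq_big_nat => j /andP [_ hj].
rewrite add0n subSS subKn; last by lia.
have e : s - (b + (n - j)%:R) = 1 + a - b + j%:R.
  by rewrite /s natrB; [ring | lia].
rewrite -e V1 mulr_sumr mulr_suml; apply: eq_big_nat => i /andP [_ hi].
have hij : (i <= j)%N by lia.
have [e1 hz] := hsplit i j hij.
rewrite e1 /G pochD subKn; last by lia.
have := fact_neq0 (n - j); have := hs i.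
move=> h1 h2.
field.
by rewrite h1 h2 hz.
Qed.

End H.

Theorem mainTheorem10 (R : realType) (n : nat) (a b : R[i])
  (ha : ~ nonpos_int a)
  (h1 : ~ nonpos_int (1 + a + n%:R))
  (h2 : ~ nonpos_int (1 + a - b))
  (h3 : ~ nonpos_int (1 - b - n%:R)) :
  hypF_trunc [:: a / 2; (a + 1) / 2; b] [:: a; 1 + a + n%:R] 4 n =
  poch b n / n`!%:R *
  hypF_terminating n [:: (1 + a - b) / 2; (2 + a - b) / 2; 1]
                     [:: 1 + a - b; 1 - b - n%:R; 1 + a + n%:R] 4.
Proof.
rewrite /hypF_terminating /hypF_trunc.
have hs : forall k, poch (1 + a + n%:R) k != 0 by move=> k; apply: poch_neq0.
have hc := @core _ a b n hs; rewrite !big_mkord in hc.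
rewrite (eq_bigr (fun k : 'I_n.+1 => poch b k / k`!%:R * poch (a + k%:R) k
    / poch (1 + a + n%:R) k)); last first.
  move=> k _; rewrite /hyp_term !big_cons !big_nil !mulr1.
  have hd := @dup _ a k; rewrite -addnn pochD in hd.
  have ha' := @poch_neq0 _ _ k ha; have hk := fact_neq0 R[i] k; have hsk := hs k.
  transitivity (poch (a/2) k * poch ((a+1)/2) k * 4 ^+ k * poch b k
     / (k`!%:R * (poch a k * poch (1 + a + n%:R) k))); first by ring.
  rewrite hd; field.
  by rewrite ha' hk hsk.
rewrite hc mulr_sumr; apply: eq_bigr => k _; symmetry.
have hkn : (k <= n)%N by have := ltn_ord k; lia.
rewrite /hyp_term !big_cons !big_nil !mulr1 poch1.
have -> : (2 + a - b) / 2 = ((1 + a - b) + 1) / 2 by congr (_ / _); ring.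
have hd := @dup _ (1 + a - b) k; rewrite -addnn pochD in hd.
have hq := @pochQ _ b (n - k) k; rewrite subnK // in hq.
have hc1 := @poch_neq0 _ _ k h2; have hc2 := @poch_neq0 _ _ k h3; have hsk := hs k.
have hk := fact_neq0 R[i] k; have hn := fact_neq0 R[i] n;
have hnk := fact_neq0 R[i] (n - k).
transitivity (poch b n * poch (- n%:R) k * (n - k)`!%:R *
    (poch ((1 + a - b) / 2) k * poch ((1 + a - b + 1) / 2) k * 4 ^+ k)
    / (n`!%:R * (n - k)`!%:R * poch (1 + a - b) k * poch (1 - b - n%:R) k
       * poch (1 + a + n%:R) k)).
  field.
  by rewrite hc1 hc2 hsk hk hn hnk.
rewrite hd hq; field.
by rewrite hc1 hc2 hsk hn hnk.
Qed.
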